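(* Let $N\ge 1$ and $M$ be integers and let $\mathcal{G}_{N,M}=\{G_1,\dots,G_{S_{N,M}}\}$ be the set of simple undirected networks (no self-edges, no repeated edges) on the fixed node set $\{1,\dots,N\}$ with exactly $M$ edges, so $S_{N,M}=\binom{N(N-1)/2}{M}$. Consider the Markov chain on $\mathcal{G}_{N,M}$ given by uniform rewiring, with transition matrix $P_{rs}$ equal to the probability that one uniform rewire turns $G_r$ into $G_s$, and let $\pi^{(t)}$ evolve by $\pi^{(t+1)}_s=\sum_r \pi^{(t)}_r P_{rs}$ from an initial distribution $\pi^{(0)}$ concentrated on an initial network $G^{(0)}\in\mathcal{G}_{N,M}$. Then this Markov chain is ergodic and has the uniform stationary distribution: $\lim_{t\to\infty}\pi^{(t)}_s=S_{N,M}^{-1}$ for every $s$.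
   Context: Uniform rewiring is the stochastic map on $\mathcal{G}_{N,M}$ taking a network with edge set $\mathcal{E}$ to the network with edge set $(\mathcal{E}\setminus\{(i,j)\})\cup\{(i',j')\}$, where $(i,j)$ is chosen uniformly at random from $\mathcal{E}$, and then $(i',j')$ is chosen uniformly at random among the $N(N-1)/2-M+1$ node pairs $\{i',j'\}$, $i'\neq j'$, that are not edges of $\mathcal{E}\setminus\{(i,j)\}$ (so re-selecting $(i,j)$ is allowed). *)

(* Defs.v *)
From HB Require Import structures.
From mathcomp Require Import all_boot all_order all_algebra.
From mathcomp Require Import all_classical all_reals all_analysis.
Set Implicit Arguments. Unset Strict Implicit. Unset Printing Implicit Defensive.
Import Order.TTheory GRing.Theory Num.Theory.
Local Open Scope ring_scope.

Definition pairT (N : nat) := {s : {set 'I_N} | #|s| == 2%N}.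

Definition net (N M : nat) := {E : {set pairT N} | #|E| == M}.

(* Transition probability of uniform rewiring, following the definition:
   choose (i,j) uniformly in E, then choose (i',j') uniformly among the
   node pairs that are not edges of E \ {(i,j)}. *)
Definition rewireP (R : realType) (N M : nat) (G H : net N M) : R :=
  \sum_(e in val G)
    \sum_(e' in ~: (val G :\ e))
      (if val H == (val G :\ e) :|: [set e'] then
         (#|val G|%:R)^-1 * (#|~: (val G :\ e)|%:R)^-1 else 0).

Fixpoint rewire_dist (R : realType) (N M : nat) (G0 : net N M) (t : nat)
  : net N M -> R :=
  match t with
  | 0%N => fun s => (s == G0)%:R
  | t'.+1 => fun s => \sum_r rewire_dist R G0 t' r * rewireP R r s
  end.

Definition stepP (R : realType) (N M : nat) (t : nat) (r s : net N M) : R :=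
  rewire_dist R r t s.

Definition irreducible_chain (R : realType) (N M : nat) : Prop :=
  forall r s : net N M, exists t : nat, 0 < stepP R t r s.

Definition aperiodic_chain (R : realType) (N M : nat) : Prop :=
  forall r : net N M, forall d : nat,
    (forall t : nat, (0 < t)%N -> 0 < stepP R t r r -> (d %| t)%N) -> d = 1%N.

Definition ergodic_chain (R : realType) (N M : nat) : Prop :=
  irreducible_chain R N M /\ aperiodic_chain R N M.

(* Main.v *)
Require Import Defs.
From HB Require Import structures.
From mathcomp Require Import all_boot all_order all_algebra.
From mathcomp Require Import all_classical all_reals all_analysis.
From mathcomp Require Import zify ring lra.
Import Order.TTheory GRing.Theory Num.Theory.
Import numFieldNormedType.Exports.
Set Implicit Arguments. Unset Strict Implicit. Unset Printing Implicit Defensive.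
Local Open Scope ring_scope.

Lemma card_net (N M : nat) (G : net N M) : #|val G| = M.
Proof. exact: (eqP (valP G)). Qed.

Lemma M_le (N M : nat) (G : net N M) : (M <= #|{: pairT N}|)%N.
Proof. rewrite -(card_net G); exact: max_card. Qed.

Lemma card_compl (N M : nat) (G : net N M) e : e \in val G ->
  #|~: (val G :\ e)| = (#|{: pairT N}| - M.-1)%N.
Proof.
move=> He; have h2 : M = (#|val G :\ e|).+1.
  have := cardsD1 e (val G); rewrite He card_net; exact.
rewrite -(cardsC (val G :\ e)). lia.
Qed.

Lemma card_swap (T : finType) (G : {set T}) e e' : e \in G -> e' \notin G :\ e ->
  #|G :\ e :|: [set e']| = #|G|.
Proof.
move=> He He'; rewrite finset.setUC cardsU1 He' (cardsD1 e G) He; by [].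
Qed.

Lemma flip_ok (T : finType) (G H : {set T}) e e' : e \in G -> e' \notin G :\ e ->
  H = G :\ e :|: [set e'] -> (e' \in H) && (e \notin H :\ e') && (G == H :\ e' :|: [set e]).
Proof.
move=> He He' ->; rewrite !inE negb_and negbK in He'.
rewrite -andbA; apply/and3P; split.
- by rewrite !inE eqxx orbT.
- by rewrite !inE eqxx /=; case: eqP.
- apply/eqP/setP => x; rewrite !inE.
  case: (eqVneq x e) => [->|hxe]; first by rewrite He orbT.
  case: (eqVneq x e') => [hx|hxe'] /=; last by rewrite !orbF.
  subst x; case/orP: He' => [/eqP hh|hh]; first by rewrite hh eqxx in hxe.
  by apply/negbTE.
Qed.

Definition Ain (R : realType) (N M : nat) (G H : net N M) : R :=
  \sum_(e : pairT N) \sum_(e' : pairT N)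
    ((e \in val G) && (e' \notin val G :\ e) && (val H == val G :\ e :|: [set e']))%:R.

Definition Kc (N M : nat) := (#|{: pairT N}| - M.-1)%N.

Lemma rewireP_eq (R : realType) (N M : nat) (G H : net N M) :
  rewireP R G H = (M%:R * (Kc N M)%:R)^-1 * Ain R G H.
Proof.
rewrite /rewireP /Ain mulr_sumr big_mkcond /=; apply: eq_bigr => e _.
case: (boolP (e \in val G)) => He /=.
- rewrite mulr_sumr big_mkcond /=; apply: eq_bigr => e' _.
  rewrite finset.in_setC; case: (e' \notin _) => /=; last by rewrite mulr0.
  rewrite card_net card_compl // invfM.
  by case: (val H == _); rewrite ?mulr1 ?mulr0.
- by rewrite big1 ?mulr0 // => e' _; rewrite mulr0.
Qed.

Lemma Ain_sym (R : realType) (N M : nat) (G H : net N M) : Ain R G H = Ain R H G.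
Proof.
rewrite /Ain exchange_big; apply: eq_bigr => e' _; apply: eq_bigr => e _.
congr (_%:R); congr (nat_of_bool _); apply/idP/idP.
- by case/andP => [/andP [h1 h2] /eqP h3]; apply: flip_ok.
- case/andP => [/andP [h1 h2] /eqP h3].
  by have /andP [/andP [-> ->] ->] := flip_ok h1 h2 h3.
Qed.

Lemma sum_eqval (R : realType) (N M : nat) (X : {set pairT N}) (hX : #|X| == M) :
  \sum_(H : net N M) ((val H == X)%:R : R) = 1.
Proof.
rewrite (bigD1 (exist _ X hX : net N M)) //= eqxx big1 ?addr0 // => H hH.
case: eqP => // hv; case/negP: hH; apply/eqP; apply: val_inj; exact: hv.
Qed.

Lemma Ain_rowsum (R : realType) (N M : nat) (G : net N M) :
  \sum_H Ain R G H = (M * Kc N M)%:R.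
Proof.
transitivity (\sum_(e : pairT N) \sum_(e' : pairT N)
   (((e \in val G) && (e' \notin val G :\ e))%:R : R)).
  rewrite exchange_big /=; apply: eq_bigr => e _; rewrite exchange_big /=.
  apply: eq_bigr => e' _.
  case: (boolP ((e \in val G) && (e' \notin val G :\ e))) => h.
    case/andP: h => h1 h2; apply: sum_eqval.
    by rewrite card_swap // card_net.
  by apply: big1 => H _; move: h; case: (_ && _).
rewrite (eq_bigr (fun e => if e \in val G then (Kc N M)%:R else 0)).
  by rewrite -big_mkcond sumr_const card_net natrM mulrC mulr_natr.
move=> e _; case: (boolP (e \in val G)) => He /=.
  rewrite (eq_bigr (fun e' => if e' \in ~: (val G :\ e) then 1 else 0)).
    by rewrite -big_mkcond sumr_const card_compl.
  by move=> e' _; rewrite finset.in_setC; case: (_ \notin _).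
by apply: big1.
Qed.

Lemma cst_neq0 (R : realType) (N M : nat) (G : net N M) : (0 < M)%N ->
  (M%:R * (Kc N M)%:R : R) != 0.
Proof.
move=> hM; have := M_le G; rewrite /Kc => hle.
rewrite mulf_neq0 // pnatr_eq0; lia.
Qed.

Lemma rowsum (R : realType) (N M : nat) (hM : (0 < M)%N) (G : net N M) :
  \sum_H rewireP R G H = 1.
Proof.
rewrite (eq_bigr _ (fun H _ => rewireP_eq R G H)) -mulr_sumr Ain_rowsum natrM.
by rewrite mulVf // cst_neq0.
Qed.

Lemma colsum (R : realType) (N M : nat) (hM : (0 < M)%N) (H : net N M) :
  \sum_G rewireP R G H = 1.
Proof.
rewrite (eq_bigr _ (fun G _ => rewireP_eq R G H)) -mulr_sumr.
rewrite (eq_bigr _ (fun G _ => Ain_sym R G H)) Ain_rowsum natrM.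
by rewrite mulVf // (cst_neq0 R H).
Qed.

Lemma Ain_ge0 (R : realType) (N M : nat) (G H : net N M) : 0 <= Ain R G H.
Proof. by apply: sumr_ge0 => e _; apply: sumr_ge0 => e' _; rewrite ler0n. Qed.

Lemma rewireP_ge0 (R : realType) (N M : nat) (G H : net N M) : 0 <= rewireP R G H.
Proof. by rewrite rewireP_eq mulr_ge0 ?Ain_ge0 // invr_ge0 -natrM ler0n. Qed.

Lemma sum_pos (R : realType) (T : finType) (F : T -> R) j :
  (forall i, 0 <= F i) -> 0 < F j -> 0 < \sum_i F i.
Proof.
move=> h hj; rewrite (bigD1 j) //=.
have : 0 <= \sum_(i | i != j) F i by apply: sumr_ge0.
move: hj; set a := F j; set b := \sum_(i | _) _ => ha hb.
by apply: lt_le_trans ha _; rewrite lerDl.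
Qed.

Lemma rewireP_pos (R : realType) (N M : nat) (hM : (0 < M)%N) (G H : net N M) e e' :
  e \in val G -> e' \notin val G :\ e -> val H = val G :\ e :|: [set e'] ->
  0 < rewireP R G H.
Proof.
move=> h1 h2 h3; rewrite rewireP_eq mulr_gt0 //.
  by rewrite invr_gt0 lt_def cst_neq0 // -natrM ler0n.
rewrite /Ain; apply: (@sum_pos _ _ _ e).
  by move=> i; apply: sumr_ge0 => ? _; rewrite ler0n.
apply: (@sum_pos _ _ _ e'); first by move=> i; rewrite ler0n.
by rewrite h1 h2 h3 eqxx ltr01.
Qed.

Lemma rewireP_self (R : realType) (N M : nat) (hM : (0 < M)%N) (G : net N M) :
  0 < rewireP R G G.
Proof.
have : (0 < #|val G|)%N by rewrite card_net.
case/card_gt0P => e He; apply: (@rewireP_pos _ _ _ hM G G e e) => //.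
  by rewrite !inE eqxx.
by apply/setP => x; rewrite !inE; case: (eqVneq x e) => [->|]; rewrite ?He ?orbT ?orbF.
Qed.

Lemma dist_ge0 (R : realType) (N M : nat) (G0 : net N M) t s : 0 <= rewire_dist R G0 t s.
Proof.
elim: t s => [|t IH] s /=; first by rewrite ler0n.
by apply: sumr_ge0 => r _; rewrite mulr_ge0 // rewireP_ge0.
Qed.

Lemma dist_sum1 (R : realType) (N M : nat) (hM : (0 < M)%N) (G0 : net N M) t :
  \sum_s rewire_dist R G0 t s = 1.
Proof.
elim: t => [|t IH] /=.
  by rewrite (bigD1 G0) //= eqxx big1 ?addr0 // => s /negPf ->.
rewrite exchange_big /= -[RHS]IH; apply: eq_bigr => r _.
by rewrite -mulr_sumr rowsum // mulr1.
Qed.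

Lemma CK (R : realType) (N M : nat) (G0 : net N M) t T s :
  rewire_dist R G0 (t + T) s = \sum_r rewire_dist R G0 t r * stepP R T r s.
Proof.
elim: T s => [|T IH] s.
  rewrite addn0 /stepP /= (bigD1 s) //= eqxx mulr1 big1 ?addr0 // => r hr.
  by rewrite eq_sym (negPf hr) mulr0.
rewrite addnS /=; under eq_bigr => u _ do rewrite IH; rewrite /stepP /=.
under eq_bigr do rewrite mulr_suml.
rewrite exchange_big; apply: eq_bigr => r _; rewrite mulr_sumr.
by apply: eq_bigr => u _; rewrite mulrA.
Qed.

Lemma step_colsum (R : realType) (N M : nat) (hM : (0 < M)%N) T (s : net N M) :
  \sum_r stepP R T r s = 1.
Proof.
elim: T s => [|T IH] s; rewrite /stepP /=.
  rewrite (bigD1 s) //= eqxx big1 ?addr0 // => r hr.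
  by rewrite eq_sym (negPf hr).
rewrite exchange_big /= -[RHS](colsum R hM s); apply: eq_bigr => u _.
by have := IH u; rewrite /stepP -mulr_suml => ->; rewrite mul1r.
Qed.

Lemma step_pos_self (R : realType) (N M : nat) (hM : (0 < M)%N) t (r s : net N M) :
  0 < stepP R t r s -> 0 < stepP R t.+1 r s.
Proof.
rewrite /stepP /= => h; apply: (@sum_pos _ _ _ s).
  by move=> u; rewrite mulr_ge0 ?dist_ge0 ?rewireP_ge0.
by rewrite mulr_gt0 // rewireP_self.
Qed.

Lemma reach (R : realType) (N M : nat) (hM : (0 < M)%N) t (r s : net N M) :
  (#|val s :\: val r| <= t)%N -> 0 < stepP R t r s.
Proof.
elim: t s => [|t IH] s hst.
  have : val s = val r.
    apply/eqP; rewrite eqEcard !card_net leqnn andbT -finset.setD_eq0 -cards_eq0.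
    by rewrite leqn0 in hst.
  by move/val_inj => ->; rewrite /stepP /= eqxx ltr01.
case: (leqP #|val s :\: val r| t) => h.
  by apply: step_pos_self => //; apply: IH.
have : (0 < #|val s :\: val r|)%N by lia.
case/card_gt0P => e; rewrite finset.in_setD => /andP [her hes].
have hrs : #|val r :\: val s| = #|val s :\: val r|.
  by rewrite !cardsD !card_net finset.setIC.
have : (0 < #|val r :\: val s|)%N by rewrite hrs; lia.
case/card_gt0P => e'; rewrite finset.in_setD => /andP [he's he'r].
have he's' : e' \notin val s :\ e by rewrite finset.in_setD1 (negPf he's) andbF.
have hX : #|val s :\ e :|: [set e']| == M by rewrite card_swap // card_net.
pose u : net N M := exist (fun E : {set pairT N} => #|E| == M) _ hX.
have hu : (#|val u :\: val r| <= t)%N.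
  have -> : val u :\: val r = (val s :\: val r) :\ e.
    apply/setP => x; rewrite /u /= !inE.
    case: (eqVneq x e) => [->|hxe] /=; first by case: (eqVneq e e') => [hh|]; [rewrite hh he'r in her | rewrite andbF].
    case: (eqVneq x e') => [->|hxe'] /=; first by rewrite he'r.
    by rewrite orbF.
  have h1 : #|val s :\: val r| = (#|(val s :\: val r) :\ e|).+1.
    have := cardsD1 e (val s :\: val r); rewrite finset.in_setD her hes; exact.
  lia.
have hpos := IH u hu.
rewrite /stepP /=; apply: (@sum_pos _ _ _ u).
  by move=> v; rewrite mulr_ge0 ?dist_ge0 ?rewireP_ge0.
rewrite mulr_gt0 //.
have /andP [/andP [h1 h2] /eqP h3] := @flip_ok _ (val s) (val u) e e' hes he's' erefl.
exact: (@rewireP_pos _ _ _ hM u s e' e h1 h2 h3).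
Qed.

Lemma finmin (T : finType) (R : realType) (f : T -> R) :
  (forall x, 0 < f x) -> exists2 d, 0 < d & forall x, d <= f x.
Proof.
move=> hf.
suff [d d0 hd] : exists2 d, 0 < d & forall x, x \in enum T -> d <= f x.
  by exists d => // x; apply: hd; rewrite mem_enum.
elim: (enum T) => [|y s [d d0 hd]]; first by exists 1.
exists (Num.min d (f y)); first by rewrite lt_min d0 hf.
move=> x; rewrite in_cons; case/orP => [/eqP ->|hx]; rewrite ge_min.
  by rewrite lexx orbT.
by rewrite hd.
Qed.

Lemma exk (R : realType) (z e : R) : 0 <= z -> z < 1 -> 0 < e -> exists k : nat, z ^+ k < e.
Proof.
move=> z0 z1 e0.
have h : `|z| < 1 by rewrite ger0_norm.
have := cvg_expr h. move/cvgrPdist_lt/(_ e e0).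
case=> k0 _ hk. exists k0. have := hk k0 (leqnn _).
by rewrite /= sub0r normrN ger0_norm ?exprn_ge0.
Qed.

Lemma bound_M (N M : nat) (r s : net N M) : (#|val s :\: val r| <= M)%N.
Proof.
apply: leq_trans (_ : #|val s| <= M)%N; last by rewrite card_net.
by apply: subset_leq_card; apply: subsetDl.
Qed.

Local Open Scope classical_set_scope.

Lemma main_cvg (R : realType) (N M : nat) (hM : (0 < M)%N) (G0 : net N M) s :
  (fun t => rewire_dist R G0 t s) @ \oo --> ((#|{: net N M}|%:R)^-1 : R).
Proof.
set n := #|{: net N M}|.
have n0 : (0 < n)%N by apply/card_gt0P; exists G0.
set c := (n%:R : R)^-1.
have [d d0 hd] := @finmin _ R (fun p : net N M * net N M => stepP R M p.1 p.2)
   (fun p => reach R hM (bound_M p.1 p.2)).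
have {}hd : forall r x : net N M, d <= stepP R M r x by move=> r x; have := hd (r, x); exact.
set rho := 1 - n%:R * d.
have rho_ge0 : 0 <= rho.
  have : \sum_(x : net N M) d <= \sum_x stepP R M G0 x by apply: ler_sum => x _.
  by rewrite sumr_const (dist_sum1 R hM G0 M) -/n /rho subr_ge0 mulr_natl.
have rho_lt1 : rho < 1.
  have : 0 < n%:R * d by rewrite mulr_gt0 // ltr0n.
  rewrite /rho; lra.
set E := fun t => \sum_x `|rewire_dist R G0 t x - c|.
have cn : c *+ n = 1.
  have hn : (n%:R : R) != 0 by rewrite pnatr_eq0 -lt0n.
  by rewrite /c -[RHS](mulVf hn) mulr_natr.
have Esum0 : forall t, \sum_x (rewire_dist R G0 t x - c) = 0.
  by move=> t; rewrite sumrB dist_sum1 // sumr_const -/n cn subrr.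
have contr : forall t, E (t + M)%N <= rho * E t.
  move=> t.
  have key : forall x, rewire_dist R G0 (t + M) x - c
      = \sum_r (rewire_dist R G0 t r - c) * (stepP R M r x - d).
    move=> x; rewrite CK.
    rewrite [RHS](eq_bigr (fun r => rewire_dist R G0 t r * stepP R M r x
       - c * stepP R M r x - (rewire_dist R G0 t r - c) * d)); last first.
      by move=> r _; ring.
    by rewrite !sumrB -mulr_sumr step_colsum // mulr1 -mulr_suml Esum0 mul0r subr0.
  rewrite /E.
  apply: le_trans (_ : _ <= \sum_x \sum_r `|rewire_dist R G0 t r - c| * (stepP R M r x - d)) _.
    apply: ler_sum => x _; rewrite key; apply: le_trans (ler_norm_sum _ _ _) _.
    apply: ler_sum => r _; rewrite normrM (@ger0_norm _ (_ - d)) //.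
    by rewrite subr_ge0.
  rewrite exchange_big mulr_sumr; apply: ler_sum => r _ /=.
  rewrite -mulr_sumr sumrB.
  have -> : \sum_x stepP R M r x = 1 by rewrite /stepP dist_sum1.
  by rewrite sumr_const -/n mulrC /rho mulr_natl.
have Ebound : forall t, E t <= 2.
  move=> t; rewrite /E.
  apply: le_trans (_ : _ <= \sum_x (rewire_dist R G0 t x + c)) _.
    apply: ler_sum => x _; apply: le_trans (ler_normB _ _) _.
    by rewrite ger0_norm ?dist_ge0 // ger0_norm // /c invr_ge0 ler0n.
  rewrite big_split /= dist_sum1 // sumr_const -/n cn.
  lra.
have Ek : forall k j, E (k * M + j)%N <= 2 * rho ^+ k.
  elim=> [|k IH] j; first by rewrite mul0n add0n expr0 mulr1.
  rewrite mulSnr addnAC; apply: le_trans (contr _) _.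
  rewrite exprS mulrCA. apply: (ler_wpM2l rho_ge0); exact: IH.
apply/cvgrPdist_le => eps eps0.
have e2 : 0 < eps / 2 by rewrite divr_gt0.
have [k hk] := exk rho_ge0 rho_lt1 e2.
near=> t.
have ht : (k * M <= t)%N by near: t; apply: nbhs_infty_ge.
rewrite distrC -(subnKC ht).
apply: le_trans (_ : _ <= E (k * M + (t - k * M))%N) _.
  rewrite /E (bigD1 s) //= lerDl; exact: sumr_ge0.
apply: le_trans (Ek _ _) _.
lra.
Unshelve. all: by end_near.
Qed.

Lemma count_net (N M : nat) : #|{: net N M}| = 'C(N * (N - 1) %/ 2, M).
Proof.
have hP : #|{: pairT N}| = 'C(N, 2).
  rewrite card_sig -[in RHS](card_ord N) -card_draws; apply: eq_card => x.
  by rewrite !inE.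
have hP2 : (N * (N - 1) %/ 2)%N = #|{: pairT N}| by rewrite hP bin2 -divn2 subn1.
rewrite card_sig hP2 -card_draws; apply: eq_card => x; by rewrite !inE.
Qed.

Theorem theorem3p2 (R : realType) (N M : nat) (hN : (1 <= N)%N) (hM : (0 < M)%N)
  (G0 : net N M) :
  ergodic_chain R N M /\
  (forall s : net N M,
     \sum_r ('C(N * (N - 1) %/ 2, M)%:R)^-1 * rewireP R r s
       = ('C(N * (N - 1) %/ 2, M)%:R)^-1 :> R) /\
  (forall s : net N M,
     (fun t : nat => rewire_dist R G0 t s) @ \oo
       --> (('C(N * (N - 1) %/ 2, M)%:R)^-1 : R)).
Proof.
split; [split|split].
- by move=> r s; exists M; apply: reach => //; apply: bound_M.
- move=> r d hd; apply/eqP; rewrite -dvdn1; apply: hd => //.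
  by apply: reach => //; rewrite finset.setDv cards0.
- by move=> s; rewrite -mulr_sumr colsum // mulr1.
- by move=> s; rewrite -count_net; apply: main_cvg.
Qed.
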